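(* Let $F$ be a cumulative distribution function on $[0,\infty)$ with a density and finite positive mean $\mu$. Let $B,S$ be independent with distribution $F$ and let the price $p\sim F$ be drawn independently. Then \[\mathbb{E}_{p\sim F}\big[\mathsf{W}(p,F)\big]\ \ge\ \tfrac34\,\mathsf{OPT\text{-}W}(F).\]
   Context: Symmetric bilateral trade: $B$ (buyer's value) and $S$ (seller's value) are i.i.d. with distribution $F$. Posting price $p$, trade occurs iff $B\ge p>S$ (immaterial for continuous $F$). Welfare of price $p$: $\mathsf{W}(p,F)=\mathbb{E}[S]+\mathbb{E}[(B-S)\mathbf 1_{B\ge p>S}]$. Optimal welfare: $\mathsf{OPT\text{-}W}(F)=\mathbb{E}[S]+\mathbb{E}[(B-S)\mathbf 1_{B>S}]=\mathbb{E}[\max\{B,S\}]$. *)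

(* Defs.v *)
From mathcomp Require Import all_boot all_order all_algebra.
From mathcomp Require Import all_classical all_reals all_analysis.
Set Implicit Arguments. Unset Strict Implicit. Unset Printing Implicit Defensive.
Import Order.TTheory GRing.Theory Num.Theory.
Local Open Scope ring_scope.
Local Open Scope ereal_scope.

Section BilateralTrade.
Variable R : realType.
Notation mu := (@lebesgue_measure R).

(* The distribution F is given by its density f w.r.t. Lebesgue measure. *)
Definition is_density_on_nonneg (f : R -> R) : Prop :=
  [/\ measurable_fun setT f,
      (forall x, (0 <= f x)%R),
      (forall x, (x < 0)%R -> f x = 0%R) &
      \int[mu]_x (f x)%:E = 1].

Definition mean (f : R -> R) : \bar R := \int[mu]_x (x * f x)%:E.

Definition welfare (p : R) (f : R -> R) : \bar R :=
  mean f +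
  \int[mu]_s (\int[mu]_b
      ((b - s) * ((p <= b) && (s < p))%:R * f b * f s)%:E).

Definition opt_welfare (f : R -> R) : \bar R :=
  \int[mu]_s (\int[mu]_b (Num.max b s * f b * f s)%:E).

Definition expected_random_price_welfare (f : R -> R) : \bar R :=
  \int[mu]_p ((f p)%:E * welfare p f).

End BilateralTrade.

(* Main.v *)
Require Import Defs.
From mathcomp Require Import all_boot all_order all_algebra.
From mathcomp Require Import all_classical all_reals all_analysis.
From mathcomp Require Import measurable_realfun.
From mathcomp Require Import ring lra.
Import Order.TTheory GRing.Theory Num.Theory.
Local Open Scope ring_scope.

Section Aux.
Local Open Scope ereal_scope.
Variable R : realType.
Notation mu := (@lebesgue_measure R).

Definition M2 (g : R -> R -> R) :=
  measurable_fun [set: (R * R)%type] (fun x : R * R => g x.1 x.2).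
Definition M3 (G : R -> R -> R -> R) :=
  measurable_fun [set: ((R * R) * R)%type] (fun x : (R * R) * R => G x.1.1 x.1.2 x.2).
Definition nn2 (g : R -> R -> R) := forall s b, (0 <= g s b)%R.
Definition nn3 (G : R -> R -> R -> R) := forall p s b, (0 <= G p s b)%R.
Definition I2 (g : R -> R -> R) := \int[mu]_s \int[mu]_b (g s b)%:E.
Definition I3_def (G : R -> R -> R -> R) := \int[mu]_p I2 (G p).
Fact I3_key : unit. Proof. by []. Qed.
Definition I3 := locked_with I3_key I3_def.
Lemma I3E G : I3 G = \int[mu]_p I2 (G p).
Proof. by rewrite /I3 unlock. Qed.

Lemma M2_slice g s : M2 g -> measurable_fun [set: R] (fun b => g s b).
Proof. move=> mg; exact: (measurable_fun_pair2 s mg). Qed.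

Lemma M2_F g : M2 g -> nn2 g ->
  measurable_fun [set: R] (fun s => \int[mu]_b (g s b)%:E : \bar R).
Proof.
move=> mg g0.
apply: (measurable_fun_fubini_tonelli_F (m2 := mu) (fun x : R * R => (g x.1 x.2)%:E)).
  exact/measurable_EFinP.
by move=> x; rewrite lee_fin.
Qed.


Lemma I2D g1 g2 : M2 g1 -> M2 g2 -> nn2 g1 -> nn2 g2 ->
  I2 (fun s b => g1 s b + g2 s b)%R = I2 g1 + I2 g2.
Proof.
move=> m1 m2 n1 n2; rewrite /I2.
rewrite -ge0_integralD//; last 4 first.
- by move=> s _; apply: integral_ge0 => b _; rewrite lee_fin.
- exact: M2_F.
- by move=> s _; apply: integral_ge0 => b _; rewrite lee_fin.
- exact: M2_F.
apply: eq_integral => s _.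
under eq_integral do rewrite EFinD.
rewrite ge0_integralD//.
- by move=> b _; rewrite lee_fin.
- by apply/measurable_EFinP; exact: M2_slice.
- by move=> b _; rewrite lee_fin.
- by apply/measurable_EFinP; exact: M2_slice.
Qed.

Lemma I2Z (c : R) g : (0 <= c)%R -> M2 g -> nn2 g ->
  I2 (fun s b => c * g s b)%R = c%:E * I2 g.
Proof.
move=> c0 mg ng; rewrite /I2.
rewrite -ge0_integralZl_EFin//; last 2 first.
- by move=> s _; apply: integral_ge0 => b _; rewrite lee_fin.
- exact: M2_F.
apply: eq_integral => s _.
under eq_integral do rewrite EFinM.
rewrite ge0_integralZl_EFin//.
- by move=> b _; rewrite lee_fin.
- by apply/measurable_EFinP; exact: M2_slice.
Qed.

Lemma I2_le g1 g2 : M2 g1 -> M2 g2 -> nn2 g1 ->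
  (forall s b, g1 s b <= g2 s b)%R -> I2 g1 <= I2 g2.
Proof.
move=> m1 m2 n1 le12; rewrite /I2.
have n2 : nn2 g2 by move=> s b; exact: le_trans (n1 s b) (le12 s b).
apply: ge0_le_integral => //.
- by move=> s _; apply: integral_ge0 => b _; rewrite lee_fin.
- exact: M2_F.
- exact: M2_F.
move=> s _; apply: ge0_le_integral => //.
- by move=> b _; rewrite lee_fin.
- by apply/measurable_EFinP; exact: M2_slice.
- by apply/measurable_EFinP; exact: M2_slice.
by move=> b _; rewrite lee_fin.
Qed.

Lemma M3_slice G p : M3 G -> M2 (G p).
Proof.
move=> mG; rewrite /M2.
have -> : (fun x : R * R => G p x.1 x.2) =
  (fun x : (R * R) * R => G x.1.1 x.1.2 x.2) \o (fun x : R * R => ((p, x.1), x.2)) by [].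
apply: measurableT_comp => //.
apply: measurable_fun_pair; last exact: measurable_snd.
by apply: measurable_fun_pair => //; exact: measurable_fst.
Qed.

Lemma M3_F G : M3 G -> nn3 G -> measurable_fun [set: R] (fun p => I2 (G p)).
Proof.
move=> mG nG.
apply: (measurable_fun_fubini_tonelli_F (m2 := mu)
  (fun x : R * R => \int[mu]_b (G x.1 x.2 b)%:E)).
  apply: (measurable_fun_fubini_tonelli_F (m2 := mu)
     (fun x : (R * R) * R => (G x.1.1 x.1.2 x.2)%:E)).
    exact/measurable_EFinP.
  by move=> x; rewrite lee_fin.
by move=> x; apply: integral_ge0 => b _; rewrite lee_fin.
Qed.


Lemma nn3_slice G p : nn3 G -> nn2 (G p).
Proof. by move=> nG s b; exact: nG. Qed.

Lemma I2_ge0 g : nn2 g -> 0 <= I2 g.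
Proof.
by move=> ng; apply: integral_ge0 => s _; apply: integral_ge0 => b _; rewrite lee_fin.
Qed.

Lemma I3D G1 G2 : M3 G1 -> M3 G2 -> nn3 G1 -> nn3 G2 ->
  I3 (fun p s b => G1 p s b + G2 p s b)%R = I3 G1 + I3 G2.
Proof.
move=> m1 m2 n1 n2; rewrite !I3E.
rewrite -ge0_integralD//; last 4 first.
- by move=> p _; exact: I2_ge0.
- exact: M3_F.
- by move=> p _; exact: I2_ge0.
- exact: M3_F.
apply: eq_integral => p _; apply: I2D; exact: M3_slice || exact: nn3_slice.
Qed.

Lemma I3Z (c : R) G : (0 <= c)%R -> M3 G -> nn3 G ->
  I3 (fun p s b => c * G p s b)%R = c%:E * I3 G.
Proof.
move=> c0 mG nG; rewrite !I3E.
rewrite -ge0_integralZl_EFin//; last 2 first.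
- by move=> p _; exact: I2_ge0.
- exact: M3_F.
apply: eq_integral => p _; apply: I2Z => //; try exact: M3_slice; exact: nn3_slice.
Qed.

Lemma I3_le G1 G2 : M3 G1 -> M3 G2 -> nn3 G1 ->
  (forall p s b, G1 p s b <= G2 p s b)%R -> I3 G1 <= I3 G2.
Proof.
move=> m1 m2 n1 le12; rewrite !I3E.
have n2 : nn3 G2 by move=> p s b; exact: le_trans (n1 p s b) (le12 p s b).
apply: ge0_le_integral => //.
- by move=> p _; exact: I2_ge0.
- exact: M3_F.
- exact: M3_F.
move=> p _; apply: I2_le => //; try exact: M3_slice; exact: nn3_slice.
Qed.

Lemma I3_23 G : M3 G -> nn3 G -> I3 (fun p s b => G p b s) = I3 G.
Proof.
move=> mG nG; rewrite !I3E; apply: eq_integral => p _; rewrite /I2.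
symmetry.
apply: (fubini_tonelli (m1 := mu) (m2 := mu) (fun x : R * R => (G p x.1 x.2)%:E)).
  by apply/measurable_EFinP; exact: M3_slice.
by move=> x; rewrite lee_fin.
Qed.

Lemma I3_12 G : M3 G -> nn3 G -> I3 (fun p s b => G s p b) = I3 G.
Proof.
move=> mG nG; rewrite !I3E /I2.
symmetry.
apply: (fubini_tonelli (m1 := mu) (m2 := mu)
  (fun x : R * R => \int[mu]_b (G x.1 x.2 b)%:E)).
  apply: (measurable_fun_fubini_tonelli_F (m2 := mu)
     (fun x : (R * R) * R => (G x.1.1 x.1.2 x.2)%:E)).
    exact/measurable_EFinP.
  by move=> x; rewrite lee_fin.
by move=> x; apply: integral_ge0 => b _; rewrite lee_fin.
Qed.

Lemma M3_12 G : M3 G -> M3 (fun p s b => G s p b).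
Proof.
move=> mG; rewrite /M3.
have -> : (fun x : (R * R) * R => G x.1.2 x.1.1 x.2) =
  (fun x : (R * R) * R => G x.1.1 x.1.2 x.2) \o
  (fun x : (R * R) * R => ((x.1.2, x.1.1), x.2)) by [].
apply: measurableT_comp => //.
apply: measurable_fun_pair; last exact: measurable_snd.
apply: measurable_fun_pair.
  exact: (measurableT_comp measurable_snd measurable_fst).
exact: (measurableT_comp measurable_fst measurable_fst).
Qed.

Lemma M3_23 G : M3 G -> M3 (fun p s b => G p b s).
Proof.
move=> mG; rewrite /M3.
have -> : (fun x : (R * R) * R => G x.1.1 x.2 x.1.2) =
  (fun x : (R * R) * R => G x.1.1 x.1.2 x.2) \o
  (fun x : (R * R) * R => ((x.1.1, x.2), x.1.2)) by [].
apply: measurableT_comp => //.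
apply: measurable_fun_pair; last exact: (measurableT_comp measurable_snd measurable_fst).
apply: measurable_fun_pair; last exact: measurable_snd.
exact: (measurableT_comp measurable_fst measurable_fst).
Qed.


Lemma nn3D G1 G2 : nn3 G1 -> nn3 G2 -> nn3 (fun p s b => G1 p s b + G2 p s b)%R.
Proof. by move=> n1 n2 p s b; apply: addr_ge0. Qed.

Lemma M3D G1 G2 : M3 G1 -> M3 G2 -> M3 (fun p s b => G1 p s b + G2 p s b)%R.
Proof. by move=> m1 m2; exact: measurable_funD. Qed.

Lemma M3M G1 G2 : M3 G1 -> M3 G2 -> M3 (fun p s b => G1 p s b * G2 p s b)%R.
Proof. by move=> m1 m2; exact: measurable_funM. Qed.

Lemma M3B G1 G2 : M3 G1 -> M3 G2 -> M3 (fun p s b => G1 p s b - G2 p s b)%R.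
Proof. by move=> m1 m2; exact: measurable_funB. Qed.

Lemma M3max G1 G2 : M3 G1 -> M3 G2 -> M3 (fun p s b => Num.max (G1 p s b) (G2 p s b))%R.
Proof. by move=> m1 m2; exact: measurable_maxr. Qed.

Lemma M3c (c : R) : M3 (fun _ _ _ => c).
Proof. exact: measurable_cst. Qed.

Lemma M3p : M3 (fun p _ _ => p).
Proof. exact: (measurableT_comp measurable_fst measurable_fst). Qed.
Lemma M3s : M3 (fun _ s _ => s).
Proof. exact: (measurableT_comp measurable_snd measurable_fst). Qed.
Lemma M3b : M3 (fun _ _ b => b).
Proof. exact: measurable_snd. Qed.

Definition B3 (c : R -> R -> R -> bool) :=
  measurable_fun [set: ((R * R) * R)%type] (fun x : (R * R) * R => c x.1.1 x.1.2 x.2).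

Lemma M3ind c : B3 c -> M3 (fun p s b => (c p s b)%:R)%R.
Proof.
move=> mc; rewrite /M3.
have -> : (fun x : (R * R) * R => ((c x.1.1 x.1.2 x.2)%:R : R)) =
  (fun x => if c x.1.1 x.1.2 x.2 then 1%R else 0%R).
  by apply/funext => x; case: (c _ _ _).
by apply: measurable_fun_ifT => //; exact: measurable_cst.
Qed.

Lemma B3and c1 c2 : B3 c1 -> B3 c2 -> B3 (fun p s b => c1 p s b && c2 p s b).
Proof. by move=> m1 m2; exact: measurable_and. Qed.

Lemma B3le G1 G2 : M3 G1 -> M3 G2 -> B3 (fun p s b => G1 p s b <= G2 p s b)%R.
Proof. by move=> m1 m2; exact: measurable_fun_ler. Qed.

Lemma B3lt G1 G2 : M3 G1 -> M3 G2 -> B3 (fun p s b => G1 p s b < G2 p s b)%R.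
Proof. by move=> m1 m2; exact: measurable_fun_ltr. Qed.

Lemma B3eq G1 G2 : M3 G1 -> M3 G2 -> B3 (fun p s b => G1 p s b == G2 p s b)%R.
Proof. by move=> m1 m2; exact: measurable_fun_eqr. Qed.

Lemma M3comp (h : R -> R) G : measurable_fun [set: R] h -> M3 G ->
  M3 (fun p s b => h (G p s b)).
Proof. by move=> mh mG; exact: (measurableT_comp mh mG). Qed.

Lemma sym6 G : M3 G -> nn3 G ->
  I3 (fun p s b => G p s b + G s p b + G p b s + G s b p + G b p s + G b s p)%R =
  I3 G + I3 G + I3 G + I3 G + I3 G + I3 G.
Proof.
move=> mG nG.
have m12 := M3_12 _ mG; have m23 := M3_23 _ mG.
have m123 : M3 (fun p s b => G s b p) by exact: (M3_12 _ m23).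
have m132 : M3 (fun p s b => G b p s) by exact: (M3_23 _ m12).
have m13 : M3 (fun p s b => G b s p) by exact: (M3_23 _ m123).
have n12 : nn3 (fun p s b => G s p b) by move=> *; exact: nG.
have n23 : nn3 (fun p s b => G p b s) by move=> *; exact: nG.
have n123 : nn3 (fun p s b => G s b p) by move=> *; exact: nG.
have n132 : nn3 (fun p s b => G b p s) by move=> *; exact: nG.
have n13 : nn3 (fun p s b => G b s p) by move=> *; exact: nG.
have e12 : I3 (fun p s b => G s p b) = I3 G := I3_12 G mG nG.
have e23 : I3 (fun p s b => G p b s) = I3 G := I3_23 G mG nG.
have e123 : I3 (fun p s b => G s b p) = I3 G.
  by rewrite -e23; exact: (I3_12 (fun p s b => G p b s) m23 n23).
have e132 : I3 (fun p s b => G b p s) = I3 G.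
  by rewrite -e12; exact: (I3_23 (fun p s b => G s p b) m12 n12).
have e13 : I3 (fun p s b => G b s p) = I3 G.
  by rewrite -e123; exact: (I3_23 (fun p s b => G s b p) m123 n123).
pose A1 := fun p s b => (G p s b + G s p b)%R.
pose A2 := fun p s b => (A1 p s b + G p b s)%R.
pose A3 := fun p s b => (A2 p s b + G s b p)%R.
pose A4 := fun p s b => (A3 p s b + G b p s)%R.
have mA1 : M3 A1 := M3D _ _ mG m12.
have mA2 : M3 A2 := M3D _ _ mA1 m23.
have mA3 : M3 A3 := M3D _ _ mA2 m123.
have mA4 : M3 A4 := M3D _ _ mA3 m132.
have nA1 : nn3 A1 := nn3D _ _ nG n12.
have nA2 : nn3 A2 := nn3D _ _ nA1 n23.
have nA3 : nn3 A3 := nn3D _ _ nA2 n123.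
have nA4 : nn3 A4 := nn3D _ _ nA3 n132.
have h5 : I3 (fun p s b => G p s b + G s p b + G p b s + G s b p + G b p s + G b s p)%R
   = I3 A4 + I3 (fun p s b => G b s p) := I3D A4 _ mA4 m13 nA4 n13.
have h4 : I3 A4 = I3 A3 + I3 (fun p s b => G b p s) := I3D A3 _ mA3 m132 nA3 n132.
have h3 : I3 A3 = I3 A2 + I3 (fun p s b => G s b p) := I3D A2 _ mA2 m123 nA2 n123.
have h2 : I3 A2 = I3 A1 + I3 (fun p s b => G p b s) := I3D A1 _ mA1 m23 nA1 n23.
have h1 : I3 A1 = I3 G + I3 (fun p s b => G s p b) := I3D G _ mG m12 nG n12.
rewrite h5 h4 h3 h2 h1.
by rewrite e12 e23 e123 e132 e13.
Qed.


Lemma I3_sbp G : M3 G -> nn3 G -> I3 (fun p s b => G s b p) = I3 G.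
Proof.
move=> mG nG.
have m23 := M3_23 _ mG.
have n23 : nn3 (fun p s b => G p b s) by move=> *; exact: nG.
have e23 : I3 (fun p s b => G p b s) = I3 G := I3_23 G mG nG.
by rewrite -e23; exact: (I3_12 (fun p s b => G p b s) m23 n23).
Qed.

Local Open Scope ring_scope.
Definition tt (p s b : R) : R := (b - s) * ((s <= p) && (p <= b))%:R.
Definition phi (p s b : R) : R := s + tt p s b.
Definition psi (p s b : R) : R := Num.max b s.

Lemma tt_ge0 p s b : 0 <= tt p s b.
Proof.
rewrite /tt; case: (boolP ((s <= p) && (p <= b))) => [/andP[h1 h2]|_].
  by rewrite mulr1 subr_ge0 (le_trans h1 h2).
by rewrite mulr0.
Qed.

Lemma tt_eq p s b : s <= p -> p <= b -> tt p s b = b - s.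
Proof. by move=> h1 h2; rewrite /tt h1 h2 mulr1. Qed.

Lemma key_sorted a b c : 0 <= a -> a <= b -> b <= c ->
  3/4 * (psi a b c + psi b a c + psi a c b + psi b c a + psi c a b + psi c b a)
  <= phi a b c + phi b a c + phi a c b + phi b c a + phi c a b + phi c b a.
Proof.
move=> a0 ab bc.
have ac := le_trans ab bc.
rewrite /phi /psi (tt_eq b a c ab bc).
rewrite (max_r ab) (max_l ab) (max_r bc) (max_l bc) (max_r ac) (max_l ac).
have := tt_ge0 a b c; have := tt_ge0 a c b; have := tt_ge0 b c a;
have := tt_ge0 c a b; have := tt_ge0 c b a.
lra.
Qed.

Lemma key x y z : 0 <= x -> 0 <= y -> 0 <= z ->
  3/4 * (psi x y z + psi y x z + psi x z y + psi y z x + psi z x y + psi z y x)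
  <= phi x y z + phi y x z + phi x z y + phi y z x + phi z x y + phi z y x.
Proof.
move=> x0 y0 z0.
have [xy|yx] := leP x y; have [yz|zy] := leP y z; have [xz|zx] := leP x z.
- have := key_sorted _ _ _ x0 xy yz; lra.
- lra.
- have := key_sorted _ _ _ x0 xz (ltW zy); lra.
- have := key_sorted _ _ _ z0 (ltW zx) xy; lra.
- have := key_sorted _ _ _ y0 (ltW yx) xz; lra.
- have := key_sorted _ _ _ y0 yz (ltW zx); lra.
- lra.
- have := key_sorted _ _ _ z0 (ltW zy) (ltW yx); lra.
Qed.


Lemma six_real (a b : R) : (a + a + a + a + a + a <= b + b + b + b + b + b)%R -> (a <= b)%R.
Proof. move=> h; lra. Qed.

Variable f : R -> R.
Hypothesis mf : measurable_fun [set: R] f.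
Hypothesis f0 : forall x, 0 <= f x.
Hypothesis fneg : forall x, x < 0 -> f x = 0.
Hypothesis f1 : (\int[mu]_x (f x)%:E = 1)%E.

Lemma ffm x y z (r : R) : (0 <= x -> 0 <= y -> 0 <= z -> 0 <= r) ->
  0 <= f x * f y * f z * r.
Proof.
move=> h.
have [hx|hx] := ltP x 0; first by rewrite (fneg _ hx) !mul0r.
have [hy|hy] := ltP y 0; first by rewrite (fneg _ hy) mulr0 !mul0r.
have [hz|hz] := ltP z 0; first by rewrite (fneg _ hz) mulr0 mul0r.
by rewrite !mulr_ge0 // h.
Qed.

Lemma cstE (c : R) : 0 <= c -> (\int[mu]_x (c * f x)%:E = c%:E)%E.
Proof.
move=> c0.
under eq_integral do rewrite EFinM.
rewrite ge0_integralZl_EFin //.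
- by rewrite f1 mule1.
- by move=> x _; rewrite lee_fin.
- by apply/measurable_EFinP; exact: mf.
Qed.

Lemma mF : M3 (fun p s b => f p * f s * f b).
Proof.
exact: (M3M _ _ (M3M _ _ (M3comp _ _ mf M3p) (M3comp _ _ mf M3s)) (M3comp _ _ mf M3b)).
Qed.

Lemma mtt : M3 tt.
Proof.
rewrite /tt.
apply: (M3M _ _ (M3B _ _ M3b M3s)).
apply: M3ind.
exact: (B3and _ _ (B3le _ _ M3s M3p) (B3le _ _ M3p M3b)).
Qed.

Definition Gm p s b := f p * f s * f b * psi p s b.
Definition Gw p s b := f p * f s * f b * phi p s b.
Definition Gr p s b := f p * f s * f b * (s + (b - s) * ((p <= b) && (s < p))%:R).
Definition GD p s b := f p * f s * f b * ((b - s) * ((s == p) && (p <= b))%:R).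

Lemma mGm : M3 Gm.
Proof. exact: (M3M _ _ mF (M3max _ _ M3b M3s)). Qed.
Lemma mGw : M3 Gw.
Proof. exact: (M3M _ _ mF (M3D _ _ M3s mtt)). Qed.
Lemma mGr : M3 Gr.
Proof.
apply: (M3M _ _ mF (M3D _ _ M3s (M3M _ _ (M3B _ _ M3b M3s) (M3ind _ _)))).
exact: (B3and _ _ (B3le _ _ M3p M3b) (B3lt _ _ M3s M3p)).
Qed.
Lemma mGD : M3 GD.
Proof.
apply: (M3M _ _ mF (M3M _ _ (M3B _ _ M3b M3s) (M3ind _ _))).
exact: (B3and _ _ (B3eq _ _ M3s M3p) (B3le _ _ M3p M3b)).
Qed.

Lemma nGm : nn3 Gm.
Proof.
move=> p s b; apply: ffm => _ _ b0; rewrite /psi.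
by rewrite le_max b0.
Qed.
Lemma nGw : nn3 Gw.
Proof. by move=> p s b; apply: ffm => _ s0 _; rewrite /phi addr_ge0 // tt_ge0. Qed.
Lemma nGr : nn3 Gr.
Proof.
move=> p s b; apply: ffm => _ s0 _; apply: addr_ge0 => //.
case: (boolP ((p <= b) && (s < p))) => [/andP[h1 h2]|_]; last by rewrite mulr0.
by rewrite mulr1 subr_ge0 ltW // (lt_le_trans h2 h1).
Qed.
Lemma nGD : nn3 GD.
Proof.
move=> p s b; apply: ffm => _ _ _.
case: (boolP ((s == p) && (p <= b))) => [/andP[/eqP h1 h2]|_]; last by rewrite mulr0.
by rewrite mulr1 subr_ge0 h1.
Qed.

Lemma sf0 s : 0 <= s * f s.
Proof.
have [hs|hs] := ltP s 0; first by rewrite (fneg _ hs) mulr0.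
by rewrite mulr_ge0.
Qed.

Lemma stepA : expected_random_price_welfare f = I3 Gr.
Proof.
rewrite /expected_random_price_welfare I3E; apply: eq_integral => p _.
rewrite /welfare /mean.
have hS : (\int[mu]_x (x * f x)%:E)%E = I2 (fun s b => s * f s * f b).
  by rewrite /I2; apply: eq_integral => s _; rewrite cstE // sf0.
rewrite hS.
set gT := fun s b => (b - s) * ((p <= b) && (s < p))%:R * f b * f s.
rewrite -/(I2 gT).
have mS : M2 (fun s b => s * f s * f b).
  exact: (M3_slice (fun _ s b => s * f s * f b) p
           (M3M _ _ (M3M _ _ M3s (M3comp _ _ mf M3s)) (M3comp _ _ mf M3b))).
have mT : M2 gT.
  apply: (M3_slice (fun _ s b => gT s b) p).
  apply: (M3M _ _ (M3M _ _ (M3M _ _ (M3B _ _ M3b M3s) (M3ind _ _)) (M3comp _ _ mf M3b))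
     (M3comp _ _ mf M3s)).
  exact: (B3and _ _ (B3le _ _ (M3c p) M3b) (B3lt _ _ M3s (M3c p))).
have nS : nn2 (fun s b => s * f s * f b) by move=> s b; rewrite mulr_ge0 // sf0.
have nT : nn2 gT.
  move=> s b; rewrite /gT; apply: mulr_ge0 => //; apply: mulr_ge0 => //.
  case: (boolP ((p <= b) && (s < p))) => [/andP[h1 h2]|_]; last by rewrite mulr0.
  by rewrite mulr1 subr_ge0 ltW // (lt_le_trans h2 h1).
rewrite -(I2D _ _ mS mT nS nT).
have mST := M3_slice (fun _ s b => s * f s * f b + gT s b) p
  (M3D _ _ (M3M _ _ (M3M _ _ M3s (M3comp _ _ mf M3s)) (M3comp _ _ mf M3b))
     (M3M _ _ (M3M _ _ (M3M _ _ (M3B _ _ M3b M3s) (M3ind _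
     (B3and _ _ (B3le _ _ (M3c p) M3b) (B3lt _ _ M3s (M3c p))))) (M3comp _ _ mf M3b))
     (M3comp _ _ mf M3s))).
rewrite -(I2Z _ _ (f0 p) mST); last by move=> s b; apply: addr_ge0.
congr I2; apply/funext => s; apply/funext => b.
rewrite /Gr /gT; ring.
Qed.

Lemma mxf0 b s : 0 <= Num.max b s * f b * f s.
Proof.
have [hb|hb] := ltP b 0; first by rewrite (fneg _ hb) mulr0 mul0r.
by rewrite !mulr_ge0 // le_max hb.
Qed.

Lemma stepB : opt_welfare f = I3 Gm.
Proof.
pose G0 := fun s b p => Num.max b s * f b * f s * f p.
have mG0 : M3 G0.
  exact: (M3M _ _ (M3M _ _ (M3M _ _ (M3max _ _ M3s M3p) (M3comp _ _ mf M3s))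
    (M3comp _ _ mf M3p)) (M3comp _ _ mf M3b)).
have nG0 : nn3 G0 by move=> s b p; rewrite /G0 mulr_ge0 // mxf0.
transitivity (I3 G0).
  rewrite /opt_welfare I3E; apply: eq_integral => s _; rewrite /I2.
  by apply: eq_integral => b _; rewrite cstE // mxf0.
rewrite -(I3_sbp G0 mG0 nG0).
congr I3; apply/funext => p; apply/funext => s; apply/funext => b.
rewrite /G0 /Gm /psi; ring.
Qed.

Lemma stepC : I3 GD = 0%E.
Proof.
rewrite -(I3_23 GD mGD nGD) I3E.
apply: integral0_eq => p _; rewrite /I2; apply: integral0_eq => s _.
have mh : measurable_fun [set: R] (fun b => (GD p b s)%:E).
  apply/measurable_EFinP.
  exact: (M2_slice _ s (M3_slice _ p (M3_23 _ mGD))).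
rewrite -(@integral_setD1 _ _ p setT); last 2 first.
- exact: measurableD.
- exact: measurable_funS mh.
apply: integral0_eq => b [_ /= hb].
rewrite /GD.
have -> : (b == p) = false by apply/negbTE/eqP.
by rewrite andFb mulr0 mulr0.
Qed.

Lemma I3_ge0 G : nn3 G -> (0 <= I3 G)%E.
Proof. by move=> nG; rewrite I3E; apply: integral_ge0 => p _; exact: I2_ge0. Qed.

Lemma six (x y : \bar R) : (0 <= x)%E -> (0 <= y)%E ->
  (x + x + x + x + x + x <= y + y + y + y + y + y)%E -> (x <= y)%E.
Proof.
move: x y => [x| |] [y| |] //=; rewrite ?lee_fin => x0 y0.
- exact: six_real.
- by move=> _; exact: leey.
Qed.

Definition symG (G : R -> R -> R -> R) :=
  fun p s b => G p s b + G s p b + G p b s + G s b p + G b p s + G b s p.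

Lemma msym G : M3 G -> M3 (symG G).
Proof.
move=> mG.
have m12 := M3_12 _ mG; have m23 := M3_23 _ mG.
have m123 := M3_12 _ m23; have m132 := M3_23 _ m12; have m13 := M3_23 _ m123.
exact: (M3D _ _ (M3D _ _ (M3D _ _ (M3D _ _ (M3D _ _ mG m12) m23) m123) m132) m13).
Qed.

Lemma nsym G : nn3 G -> nn3 (symG G).
Proof. by move=> nG p s b; rewrite /symG !addr_ge0. Qed.

Theorem main_ineq : ((3/4 : R)%:E * opt_welfare f <= expected_random_price_welfare f)%E.
Proof.
rewrite stepA stepB.
have eW : I3 Gw = I3 Gr.
  have -> : Gw = fun p s b => Gr p s b + GD p s b.
    apply/funext => p; apply/funext=> s; apply/funext => b.
    rewrite /Gw /Gr /GD /phi /tt.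
    have -> : ((s <= p) && (p <= b))%:R =
      ((p <= b) && (s < p))%:R + ((s == p) && (p <= b))%:R :> R.
      by case: ltgtP => _; rewrite /= ?andbT ?andbF ?addr0 ?add0r.
    ring.
  by rewrite (I3D Gr GD mGr mGD nGr nGD) stepC adde0.
rewrite -eW.
have c0 : (0 <= 3/4 :> R) by [].
pose Hm := fun p s b => 3/4 * Gm p s b.
have mHm : M3 Hm := M3M _ _ (M3c (3/4)) mGm.
have nHm : nn3 Hm by move=> p s b; rewrite /Hm mulr_ge0 // nGm.
rewrite -(I3Z _ _ c0 mGm nGm) -/Hm.
have s1 : I3 (symG Hm) = (I3 Hm + I3 Hm + I3 Hm + I3 Hm + I3 Hm + I3 Hm)%E :=
  sym6 Hm mHm nHm.
have s2 : I3 (symG Gw) = (I3 Gw + I3 Gw + I3 Gw + I3 Gw + I3 Gw + I3 Gw)%E :=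
  sym6 Gw mGw nGw.
apply: six; [exact: (I3_ge0 _ nHm) | exact: (I3_ge0 _ nGw) |].
rewrite -s1 -s2.
apply: I3_le; [exact: (msym _ mHm) | exact: (msym _ mGw) | exact: (nsym _ nHm) |].
move=> p s b.
pose F := f p * f s * f b.
have eL : symG Hm p s b = F * (3/4 * (psi p s b + psi s p b + psi p b s +
   psi s b p + psi b p s + psi b s p)).
  rewrite /symG /Hm /Gm /F; ring.
have eR : symG Gw p s b = F * (phi p s b + phi s p b + phi p b s +
   phi s b p + phi b p s + phi b s p).
  rewrite /symG /Gw /F; ring.
rewrite eL eR.
have [hp|hp] := ltP p 0; first by rewrite /F (fneg _ hp) !mul0r.
have [hs|hs] := ltP s 0; first by rewrite /F (fneg _ hs) mulr0 !mul0r.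
have [hb|hb] := ltP b 0; first by rewrite /F (fneg _ hb) mulr0 !mul0r.
apply: ler_wpM2l; first by rewrite /F !mulr_ge0.
exact: key.
Qed.

End Aux.

Theorem theorem2 (R : realType) (f : R -> R) (m : R) :
  is_density_on_nonneg f ->
  (0 < m)%R -> mean f = m%:E ->
  ((3 / 4 : R)%:E * opt_welfare f <= expected_random_price_welfare f)%E.
Proof.
move=> [mf f0 fneg f1] _ _.
exact: (@main_ineq R f mf f0 fneg f1).
Qed.
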